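(* Let $F$, $H$, $X$, $\Omega$, $Q$ and the sequences generated by the IneIREG method be as described in the context, and suppose $H$ is $\mu$-strongly monotone for some $\mu>0$. Suppose $\eta_k\equiv\eta>0$; $\lambda_k\in[\underline\lambda,\overline\lambda]$ for all $k\ge0$ with $0<\underline\lambda\le\overline\lambda<1/L$, $L:=L_F+\eta L_H$; and $\alpha_0\in[0,1]$ and $\alpha_{k+1}\le(1-\beta_k)\alpha_k$ for all $k\ge0$, where $\beta_k:=\big(\frac{1}{1-\lambda_k^2L^2}+\frac{1}{2\lambda_k\eta\mu}\big)^{-1}$. Define $p_{-1}:=1$, $p_k:=\big(\prod_{i=0}^k(1-\beta_i)\big)^{-1}$ for $k\ge0$, for $k\ge1$ $\Lambda_k:=\sum_{j=0}^{k-1}\lambda_j\eta p_j$ and $\overline y_k:=\Lambda_k^{-1}\sum_{j=0}^{k-1}\lambda_j\eta p_jy_j$, and $\beta:=\big(\frac{1}{1-\overline\lambda^2L^2}+\frac{1}{2\underline\lambda\eta\mu}\big)^{-1}\in(0,1)$. Then for all $k\ge1$, $$0\le\mathrm{Gap}(\overline y_k,F,X)\le\frac{(1-\beta)^k}{2\underline\lambda}\Big(D_X^2+\sum_{j=0}^{k-1}p_{j-1}\delta_j\Big)+\eta\Big(\frac{\overline\lambda C_HD_X}{\underline\lambda}\Big).$$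
   Context: Work in $\mathbb{R}^n$ with Euclidean inner product $\langle\cdot,\cdot\rangle$ and norm $\|\cdot\|$. The maps $F\colon \mathrm{Dom}\,F\to\mathbb{R}^n$ and $H\colon\mathrm{Dom}\,H\to\mathbb{R}^n$ are monotone and Lipschitz continuous with constants $L_F>0$ and $L_H>0$; $H$ is $\mu$-strongly monotone means $\langle H(x)-H(y),x-y\rangle\ge\mu\|x-y\|^2$ for all $x,y\in\mathrm{Dom}\,H$. $X$ is a nonempty compact convex set and $\Omega$ a nonempty closed convex set with $X\subset\Omega\subset\mathrm{Dom}\,F\cap\mathrm{Dom}\,H$; $P_X,P_\Omega$ denote orthogonal projections. $Q:=\{x\in X:\langle F(x),y-x\rangle\ge0\ \forall y\in X\}$ is assumed nonempty. $D_X:=\sup_{x,y\in X}\|x-y\|$, $C_H:=\sup_{x\in X}\|H(x)\|$. $\mathrm{Gap}(z,F,X):=\sup_{x\in X}\langle F(x),z-x\rangle$. IneIREG method: start with $x_0=x_{-1}\in X$; for $k=0,1,\dots$, with parameters $\alpha_k\ge0$, $\lambda_k>0$, $\eta_k>0$, set $w_k=x_k+\alpha_k(x_k-x_{k-1})$, $w'_k=P_\Omega(w_k)$, $y_k=P_X\big(w_k-\lambda_k(F(w'_k)+\eta_kH(w'_k))\big)$, $x_{k+1}=P_X\big(w_k-\lambda_k(F(y_k)+\eta_kH(y_k))\big)$. Also $\delta_k:=\alpha_k(1+\alpha_k)\|x_k-x_{k-1}\|^2$ for $k\ge0$. *)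

(* Defs.v *)
From HB Require Import structures.
From mathcomp Require Import all_boot all_order all_algebra.
From mathcomp Require Import all_classical all_reals all_analysis.
Set Implicit Arguments. Unset Strict Implicit. Unset Printing Implicit Defensive.
Import Order.TTheory GRing.Theory Num.Theory.
Import numFieldNormedType.Exports.
Local Open Scope classical_set_scope.
Local Open Scope ring_scope.

Section Defs.
Variables (R : realType) (n : nat).
Notation vec := 'rV[R]_n.

Definition dot (u v : vec) : R := \sum_(i < n) u 0 i * v 0 i.
Definition enorm (u : vec) : R := Num.sqrt (dot u u).

Definition is_convex (C : set vec) : Prop :=
  forall x y t, C x -> C y -> 0 <= t -> t <= 1 -> C (t *: x + (1 - t) *: y).

Definition op_monotone_on (D : set vec) (G : vec -> vec) : Prop :=
  forall x y, D x -> D y -> 0 <= dot (G x - G y) (x - y).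

Definition op_strongly_monotone_on (D : set vec) (G : vec -> vec) (mu : R) : Prop :=
  forall x y, D x -> D y -> mu * enorm (x - y) ^+ 2 <= dot (G x - G y) (x - y).

Definition op_lipschitz_on (D : set vec) (G : vec -> vec) (L : R) : Prop :=
  forall x y, D x -> D y -> enorm (G x - G y) <= L * enorm (x - y).

Definition is_proj (C : set vec) (P : vec -> vec) : Prop :=
  forall x, C (P x) /\ (forall y, C y -> enorm (x - P x) <= enorm (x - y)).

Definition VI_sol (F : vec -> vec) (X : set vec) : set vec :=
  [set x | X x /\ forall y, X y -> 0 <= dot (F x) (y - x)].

Definition Gap (z : vec) (F : vec -> vec) (X : set vec) : R :=
  sup [set r | exists2 x, X x & r = dot (F x) (z - x)].

Definition diam (X : set vec) : R :=
  sup [set r | exists x y, [/\ X x, X y & r = enorm (x - y)]].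

Definition supnorm (H : vec -> vec) (X : set vec) : R :=
  sup [set r | exists2 x, X x & r = enorm (H x)].

(* IneIREG iterates; x : nat -> vec with x_{-1} := x_0, encoded by x (k.-1). *)
Definition IneIREG (X Omega : set vec) (PX POm : vec -> vec) (F H : vec -> vec)
  (alpha lambda eta : nat -> R) (x w w' y : nat -> vec) : Prop :=
  [/\ X (x 0),
      forall k, w k = x k + alpha k *: (x k - x k.-1),
      forall k, w' k = POm (w k),
      forall k, y k = PX (w k - lambda k *: (F (w' k) + eta k *: H (w' k))) &
      forall k, x k.+1 = PX (w k - lambda k *: (F (y k) + eta k *: H (y k)))].

Definition delta (alpha : nat -> R) (x : nat -> vec) (k : nat) : R :=
  alpha k * (1 + alpha k) * enorm (x k - x k.-1) ^+ 2.

Definition betak (L eta mu : R) (lambda : nat -> R) (k : nat) : R :=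
  ((1 - lambda k ^+ 2 * L ^+ 2)^-1 + (2 * lambda k * eta * mu)^-1)^-1.

Definition pk (L eta mu : R) (lambda : nat -> R) (k : nat) : R :=
  (\prod_(i < k.+1) (1 - betak L eta mu lambda i))^-1.

(* pprev j = p_{j-1}, with p_{-1} = 1 *)
Definition pprev (L eta mu : R) (lambda : nat -> R) (j : nat) : R :=
  if j is j'.+1 then pk L eta mu lambda j' else 1.

Definition Lambda (L eta mu : R) (lambda : nat -> R) (k : nat) : R :=
  \sum_(j < k) lambda j * eta * pk L eta mu lambda j.

Definition ybar (L eta mu : R) (lambda : nat -> R) (y : nat -> vec) (k : nat) : vec :=
  (Lambda L eta mu lambda k)^-1 *:
    \sum_(j < k) (lambda j * eta * pk L eta mu lambda j) *: y j.

End Defs.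

(* Main.v *)
Require Import Defs.
From HB Require Import structures.
From mathcomp Require Import all_boot all_order all_algebra.
From mathcomp Require Import all_classical all_reals all_analysis.
From mathcomp Require Import ring lra.
Import Order.TTheory GRing.Theory Num.Theory.
Import numFieldNormedType.Exports.
Local Open Scope classical_set_scope.
Local Open Scope ring_scope.

Section Aux.
Variables (R : realType) (n : nat).
Notation vec := 'rV[R]_n.
Implicit Types u v z : vec.

Lemma dotC u v : dot u v = dot v u.
Proof. by rewrite /dot; apply: eq_bigr => i _; rewrite mulrC. Qed.
Lemma dotDl u v z : dot (u + v) z = dot u z + dot v z.
Proof. by rewrite /dot -big_split; apply: eq_bigr => i _; rewrite mxE mulrDl. Qed.
Lemma dotZl a u v : dot (a *: u) v = a * dot u v.
Proof. by rewrite /dot mulr_sumr; apply: eq_bigr => i _; rewrite mxE mulrA. Qed.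
Lemma dotNl u v : dot (- u) v = - dot u v.
Proof. by rewrite /dot -sumrN; apply: eq_bigr => i _; rewrite mxE mulNr. Qed.
Lemma dotBl u v z : dot (u - v) z = dot u z - dot v z.
Proof. by rewrite dotDl dotNl. Qed.
Lemma dotDr u v z : dot z (u + v) = dot z u + dot z v.
Proof. by rewrite dotC dotDl !(dotC z). Qed.
Lemma dotZr a u v : dot v (a *: u) = a * dot v u.
Proof. by rewrite dotC dotZl dotC. Qed.
Lemma dotNr u v : dot v (- u) = - dot v u.
Proof. by rewrite dotC dotNl dotC. Qed.
Lemma dotBr u v z : dot z (u - v) = dot z u - dot z v.
Proof. by rewrite dotDr dotNr. Qed.
Lemma dot0r u : dot u 0 = 0.
Proof. by rewrite /dot big1 // => i _; rewrite mxE mulr0. Qed.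
Lemma dot_sumr u k (f : nat -> vec) :
  dot u (\sum_(j < k) f j) = \sum_(j < k) dot u (f j).
Proof.
elim: k => [|k IH]; first by rewrite !big_ord0 dot0r.
by rewrite !big_ord_recr /= dotDr IH.
Qed.

Lemma dot_ge0 u : 0 <= dot u u.
Proof. by rewrite /dot; apply: sumr_ge0 => i _; rewrite -expr2 sqr_ge0. Qed.
Lemma enorm_ge0 u : 0 <= enorm u.
Proof. exact: sqrtr_ge0. Qed.
Lemma enorm_sq u : enorm u ^+ 2 = dot u u.
Proof. by rewrite /enorm sqr_sqrtr // dot_ge0. Qed.

Lemma nsqB u v : dot (u - v) (u - v) = dot u u - 2 * dot u v + dot v v.
Proof. rewrite !dotBl !dotBr (dotC v u); ring. Qed.
Lemma nsqD u v : dot (u + v) (u + v) = dot u u + 2 * dot u v + dot v v.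
Proof. rewrite !dotDl !dotDr (dotC v u); ring. Qed.
Lemma nsqZ a u : dot (a *: u) (a *: u) = a ^+ 2 * dot u u.
Proof. rewrite dotZl dotZr; ring. Qed.
Lemma nsq_sym u v : dot (u - v) (u - v) = dot (v - u) (v - u).
Proof. rewrite !nsqB (dotC v u); ring. Qed.

Lemma dot_zero u v : enorm u = 0 -> dot u v = 0.
Proof.
move=> h; have h2 : dot u u = 0 by rewrite -enorm_sq h expr0n.
have pos : forall i : 'I_n, true -> 0 <= u 0 i * u 0 i.
  by move=> i _; rewrite -expr2 sqr_ge0.
have hi := psumr_eq0P pos h2.
rewrite /dot big1 // => i _.
have /eqP : u 0 i * u 0 i = 0 by exact: hi.
by rewrite mulf_eq0 orbb => /eqP ->; rewrite mul0r.
Qed.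

Lemma CS u v : dot u v <= enorm u * enorm v.
Proof.
have [a0|ua] := eqVneq (enorm u) 0; first by rewrite dot_zero // a0 mul0r.
have [b0|vb] := eqVneq (enorm v) 0; first by rewrite dotC dot_zero // b0 mulr0.
have pa : 0 < enorm u by rewrite lt_neqAle eq_sym ua enorm_ge0.
have pb : 0 < enorm v by rewrite lt_neqAle eq_sym vb enorm_ge0.
have := dot_ge0 (enorm v *: u - enorm u *: v).
rewrite nsqB !nsqZ dotZl dotZr -!enorm_sq => h.
have hab : 0 < enorm u * enorm v by apply: mulr_gt0.
nra.
Qed.

Lemma enorm_le_sq u v : enorm u <= enorm v -> dot u u <= dot v v.
Proof.
move=> h; rewrite -!enorm_sq; have := enorm_ge0 u; nra.
Qed.

Lemma enormN u : enorm (- u) = enorm u.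
Proof. by rewrite /enorm dotNl dotNr opprK. Qed.

Lemma enorm_triangle u v : enorm (u + v) <= enorm u + enorm v.
Proof.
have h1 := CS u v; have h2 := enorm_ge0 u; have h3 := enorm_ge0 v.
have h4 := enorm_ge0 (u + v).
have : enorm (u + v) ^+ 2 <= (enorm u + enorm v) ^+ 2.
  by rewrite enorm_sq nsqD -!enorm_sq; nra.
nra.
Qed.

Lemma enorm_triangleB u v : enorm (u - v) <= enorm u + enorm v.
Proof. by rewrite -(enormN v) enorm_triangle. Qed.

Lemma proj_var (C : set vec) P x z :
  is_convex C -> is_proj C P -> C z -> dot (x - P x) (z - P x) <= 0.
Proof.
move=> cvx prj Cz; have [CP Pmin] := prj x.
set d := x - P x; set e := z - P x.
have key : forall t, 0 < t -> t <= 1 -> 2 * dot d e <= t * dot e e.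
  move=> t t0 t1.
  have Ct := cvx _ _ t Cz CP (ltW t0) t1.
  have := enorm_le_sq _ _ (Pmin _ Ct).
  have -> : x - (t *: z + (1 - t) *: P x) = d - t *: e.
    by apply/rowP => i; rewrite /d /e !mxE; ring.
  rewrite -/d (nsqB d) dotZr dotZl dotZr => h.
  have : t * (2 * dot d e) <= t * (t * dot e e) by nra.
  by rewrite ler_pM2l.
rewrite leNgt; apply/negP => pos.
have h1 := key 1 ltr01 (lexx _).
have ee : 0 < dot e e by nra.
have := key (dot d e / dot e e).
rewrite divr_gt0 // => /(_ isT).
rewrite ler_pdivrMr // mul1r => /(_ ltac:(nra)).
rewrite mulrAC -mulrA divff ?mulr1; last by rewrite gt_eqF.
nra.
Qed.


Lemma beta_comb (a b s t : R) : 0 < a -> 0 < b ->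
  (a^-1 + b^-1)^-1 * (s + t) ^+ 2 <= a * s ^+ 2 + b * t ^+ 2.
Proof.
move=> a0 b0.
have -> : (a^-1 + b^-1)^-1 = a * b / (a + b).
  by field; rewrite ?gt_eqF //; lra.
have ab : 0 < a + b by lra.
rewrite mulrAC ler_pdivrMr //.
have := sqr_ge0 (a * s - b * t); nra.
Qed.

Lemma polar (a b c : vec) : 2 * dot (a - b) (c - b) =
  dot (a - b) (a - b) + dot (c - b) (c - b) - dot (a - c) (a - c).
Proof.
have -> : a - c = (a - b) - (c - b) by apply/rowP => i; rewrite !mxE; ring.
rewrite (nsqB (a - b)); ring.
Qed.

Lemma linE (a b g c : vec) (l : R) : dot (a - l *: g - b) c = dot (a - b) c - l * dot g c.
Proof.
have -> : a - l *: g - b = (a - b) - l *: g by apply/rowP => i; rewrite !mxE; ring.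
by rewrite (dotBl (a - b)) dotZl.
Qed.

Lemma step (F H : vec -> vec) (LF LH mu lam eta : R) (w w' y xp z : vec) :
  0 <= LF -> 0 <= LH -> 0 < eta -> 0 < lam -> 0 < mu ->
  lam * (LF + eta * LH) < 1 ->
  dot (w - lam *: (F w' + eta *: H w') - y) (xp - y) <= 0 ->
  dot (w - lam *: (F y + eta *: H y) - xp) (z - xp) <= 0 ->
  dot (w - w') (y - w') <= 0 ->
  enorm (F w' - F y) <= LF * enorm (w' - y) ->
  enorm (H w' - H y) <= LH * enorm (w' - y) ->
  0 <= dot (F y - F z) (y - z) ->
  mu * enorm (y - z) ^+ 2 <= dot (H y - H z) (y - z) ->
  dot (xp - z) (xp - z) <=
    (1 - ((1 - lam ^+ 2 * (LF + eta * LH) ^+ 2)^-1 + (2 * lam * eta * mu)^-1)^-1)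
      * dot (w - z) (w - z) + 2 * lam * dot (F z + eta *: H z) (z - y).
Proof.
move=> LF0 LH0 eta0 lam0 mu0 lamL P1 P2 P3 LipF LipH monF smH.
set L := LF + eta * LH.
have A : dot (xp - z) (xp - z) <= dot (w - z) (w - z) - dot (w - xp) (w - xp)
           + 2 * lam * dot (F y + eta *: H y) (z - xp).
  move: P2; rewrite linE => h.
  have := polar w xp z; rewrite (nsq_sym z xp); nra.
have B : dot (w - y) (w - y) + dot (xp - y) (xp - y) - dot (w - xp) (w - xp)
           <= 2 * lam * dot (F w' + eta *: H w') (xp - y).
  move: P1; rewrite linE => h.
  have := polar w y xp; nra.
have E1 : dot (F w' + eta *: H w') (xp - y) + dot (F y + eta *: H y) (z - xp)
   = dot (F y + eta *: H y) (z - y)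
     + (dot (F w' - F y) (xp - y) + eta * dot (H w' - H y) (xp - y)).
  have e1 : z - xp = (z - y) - (xp - y) by apply/rowP => i; rewrite !mxE; ring.
  rewrite e1 !dotBr !dotDl ?dotNl !dotZl; ring.
set d := enorm (w' - y); set e := enorm (xp - y).
have d0 : 0 <= d := enorm_ge0 _. have e0 : 0 <= e := enorm_ge0 _.
have C1 : dot (F w' - F y) (xp - y) <= LF * d * e.
  apply: le_trans (CS _ _) _; rewrite -/e; apply: ler_wpM2r => //.
have C2 : dot (H w' - H y) (xp - y) <= LH * d * e.
  apply: le_trans (CS _ _) _; rewrite -/e; apply: ler_wpM2r => //.
have D3 : d ^+ 2 <= dot (w - y) (w - y).
  rewrite /d enorm_sq.
  have e1 : w - y = (w - w') - (y - w') by apply/rowP => i; rewrite !mxE; ring.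
  rewrite e1 (nsqB (w - w')) (nsq_sym w' y); have := dot_ge0 (w - w'); nra.
have E2 : e ^+ 2 = dot (xp - y) (xp - y) by rewrite enorm_sq.
have C3 : 2 * lam * (dot (F w' - F y) (xp - y) + eta * dot (H w' - H y) (xp - y))
   <= lam ^+ 2 * L ^+ 2 * dot (w - y) (w - y) + dot (xp - y) (xp - y).
  have h1 : dot (F w' - F y) (xp - y) + eta * dot (H w' - H y) (xp - y) <= L * d * e.
    rewrite /L; nra.
  have h2 := sqr_ge0 (lam * L * d - e).
  have L0 : 0 <= L by rewrite /L; nra.
  have h3 : lam ^+ 2 * L ^+ 2 * d ^+ 2 <= lam ^+ 2 * L ^+ 2 * dot (w - y) (w - y).
    by apply: ler_wpM2l => //; rewrite -exprMn sqr_ge0.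
  nra.
have M1 : dot (F y + eta *: H y) (z - y) <=
   dot (F z + eta *: H z) (z - y) - eta * mu * dot (y - z) (y - z).
  move: monF smH; rewrite enorm_sq.
  have e1 : z - y = - (y - z) by apply/rowP => i; rewrite !mxE; ring.
  rewrite e1 !dotNr !dotDl ?dotNl !dotZl => h1 h2; nra.
have a0 : 0 < 1 - lam ^+ 2 * L ^+ 2.
  have L0 : 0 <= L by rewrite /L; nra.
  have : lam * L < 1 by [].
  have : 0 <= lam * L by nra.
  nra.
have b0 : 0 < 2 * lam * eta * mu by apply: mulr_gt0 => //; apply: mulr_gt0 => //; apply: mulr_gt0.
have BC := beta_comb _ _ (enorm (w - y)) (enorm (y - z)) a0 b0.
have T : dot (w - z) (w - z) <= (enorm (w - y) + enorm (y - z)) ^+ 2.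
  have e1 : w - z = (w - y) + (y - z) by apply/rowP => i; rewrite !mxE; ring.
  rewrite e1 nsqD -!enorm_sq; have := CS (w - y) (y - z); nra.
move: BC; rewrite !enorm_sq.
set be := (_ ^-1 + _ ^-1)^-1 => BC.
have be0 : 0 <= be.
  rewrite /be invr_ge0; apply: addr_ge0; rewrite invr_ge0; lra.
have : be * dot (w - z) (w - z) <= be * (enorm (w - y) + enorm (y - z)) ^+ 2.
  exact: ler_wpM2l.
move=> T2.
have S1 : dot (xp - z) (xp - z) <= dot (w - z) (w - z) - dot (w - y) (w - y)
   - dot (xp - y) (xp - y) + 2 * lam * dot (F y + eta *: H y) (z - y)
   + 2 * lam * (dot (F w' - F y) (xp - y) + eta * dot (H w' - H y) (xp - y)).
  have E1p := congr1 (fun t => 2 * lam * t) E1; rewrite /= !mulrDr in E1p; lra.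
have M2 : 2 * lam * dot (F y + eta *: H y) (z - y) <=
   2 * lam * dot (F z + eta *: H z) (z - y) - 2 * lam * eta * mu * dot (y - z) (y - z).
  have lt0 : 0 < 2 * lam by lra.
  have := ler_wpM2l (ltW lt0) M1; rewrite mulrBr; lra.
lra.
Qed.


Lemma inert (u v : vec) (a : R) :
  dot ((1 + a) *: u - a *: v) ((1 + a) *: u - a *: v) =
  (1 + a) * dot u u - a * dot v v + a * (1 + a) * dot (u - v) (u - v).
Proof.
rewrite (nsqB ((1 + a) *: u)) (nsqB u) !nsqZ dotZl dotZr; ring.
Qed.

Lemma sum_pos (c : nat -> R) k : (forall j, 0 < c j) -> (0 < k)%N ->
  0 < \sum_(j < k) c j.
Proof.
move=> cp; elim: k => // k IH _; rewrite big_ord_recr /=.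
case: k IH => [_|k IH]; first by rewrite big_ord0 add0r.
by apply: addr_gt0; [apply: IH | apply: cp].
Qed.

Lemma conv_comb (X : set vec) (c : nat -> R) (y : nat -> vec) k :
  is_convex X -> (forall j, 0 < c j) -> (forall j, X (y j)) -> (0 < k)%N ->
  X ((\sum_(j < k) c j)^-1 *: \sum_(j < k) c j *: y j).
Proof.
move=> cvx cp Xy; elim: k => // k IH _.
rewrite !big_ord_recr /=.
case: k IH => [_|k IH].
  by rewrite !big_ord0 add0r add0r scalerA mulVf ?scale1r ?gt_eqF.
have Sp := sum_pos c k.+1 cp (ltn0Sn k).
move: (IH isT) Sp.
set S := \sum_(j < k.+1) c j; set V := \sum_(j < k.+1) c j *: y j => XV Sp.
have ck := cp k.+1.
have -> : (S + c k.+1)^-1 *: (V + c k.+1 *: y k.+1) =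
   (S / (S + c k.+1)) *: (S^-1 *: V) + (1 - S / (S + c k.+1)) *: y k.+1.
  apply/rowP => i; rewrite !mxE; field.
  by apply/andP; split; rewrite gt_eqF //; lra.
apply: cvx => //.
  by apply: divr_ge0; lra.
by rewrite ler_pdivrMr ?mul1r; lra.
Qed.

Lemma comp_le_norm (x : vec) i j : `|x i j| <= `|x|.
Proof.
have /mapP[k Hk ->] : `|x i j| \in [seq `|x l.1 l.2| | l : 'I_1 * 'I_n].
  by apply/mapP; exists (i, j) => //=; rewrite mem_enum.
have -> : `|x| = mx_norm x by []. rewrite mx_normrE; apply/bigmax_geP; right => /=; by exists k.
Qed.

Lemma compact_enorm_bound (X : set vec) : compact X ->
  exists M, forall x, X x -> enorm x <= M.
Proof.
move=> /compact_bounded [M [Mreal normAltM]].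
exists (1 + (M + 1) ^+ 2 *+ n) => x Xx.
have nx : `|x| <= M + 1 by apply: normAltM => //; rewrite ltrDl.
have dx : dot x x <= (M + 1) ^+ 2 *+ n.
  rewrite /dot -[n in _ *+ n]card_ord -sumr_const; apply: ler_sum => i _.
  have h := comp_le_norm x 0 i.
  have h0 : 0 <= `|x 0 i| := normr_ge0 _.
  rewrite -expr2 -real_normK ?num_real //.
  by apply: lerXn2r => //; rewrite ?nnegrE //; [lra | lra].
have := enorm_sq x; have := enorm_ge0 x; nra.
Qed.

Lemma beta_pos (a b : R) : 0 < a -> a <= 1 -> 0 < b ->
  0 < (a^-1 + b^-1)^-1 < 1.
Proof.
move=> a0 a1 b0.
have -> : (a^-1 + b^-1)^-1 = a * b / (a + b).
  by field; rewrite ?gt_eqF //; lra.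
have ab : 0 < a + b by lra.
apply/andP; split; first by apply: divr_gt0 => //; apply: mulr_gt0.
by rewrite ltr_pdivrMr // mul1r; nra.
Qed.

Lemma beta_mono (a b a' b' : R) : 0 < a -> 0 < b -> a <= a' -> b <= b' ->
  (a^-1 + b^-1)^-1 <= (a'^-1 + b'^-1)^-1.
Proof.
move=> a0 b0 aa bb.
have a'0 : 0 < a' by lra. have b'0 : 0 < b' by lra.
rewrite lef_pV2 ?posrE; last 2 first.
- by apply: addr_gt0; rewrite invr_gt0.
- by apply: addr_gt0; rewrite invr_gt0.
apply: lerD; rewrite lef_pV2 ?posrE //.
Qed.

End Aux.
Arguments dotC {R n}.
Arguments dotDl {R n}.
Arguments dotZl {R n}.
Arguments dotNl {R n}.
Arguments dotBl {R n}.
Arguments dotDr {R n}.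
Arguments dotZr {R n}.
Arguments dotNr {R n}.
Arguments dotBr {R n}.
Arguments dot0r {R n}.
Arguments dot_sumr {R n}.
Arguments dot_ge0 {R n}.
Arguments enorm_ge0 {R n}.
Arguments enorm_sq {R n}.
Arguments nsqB {R n}.
Arguments nsqD {R n}.
Arguments nsqZ {R n}.
Arguments nsq_sym {R n}.
Arguments dot_zero {R n}.
Arguments CS {R n}.
Arguments enorm_le_sq {R n}.
Arguments enormN {R n}.
Arguments enorm_triangle {R n}.
Arguments enorm_triangleB {R n}.
Arguments polar {R n}.
Arguments linE {R n}.
Arguments inert {R n}.
Arguments conv_comb {R n}.
Arguments comp_le_norm {R n}.
Arguments compact_enorm_bound {R n}.
Arguments beta_comb {R}.
Arguments sum_pos {R}.
Arguments beta_pos {R}.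
Arguments beta_mono {R}.
Theorem proposition4p17 (R : realType) (n : nat)
  (F H : 'rV[R]_n -> 'rV[R]_n) (DomF DomH X Omega : set 'rV[R]_n)
  (PX POm : 'rV[R]_n -> 'rV[R]_n) (LF LH mu : R)
  (alpha lambda : nat -> R) (eta lamlo lamhi : R)
  (x w w' y : nat -> 'rV[R]_n) :
  0 < LF -> 0 < LH ->
  op_monotone_on DomF F -> op_monotone_on DomH H ->
  op_lipschitz_on DomF F LF -> op_lipschitz_on DomH H LH ->
  0 < mu -> op_strongly_monotone_on DomH H mu ->
  X !=set0 -> compact X -> is_convex X ->
  Omega !=set0 -> closed Omega -> is_convex Omega ->
  X `<=` Omega -> Omega `<=` DomF `&` DomH ->
  is_proj X PX -> is_proj Omega POm ->
  VI_sol F X !=set0 ->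
  0 < eta ->
  0 < lamlo -> lamlo <= lamhi -> lamhi < (LF + eta * LH)^-1 ->
  (forall k, lamlo <= lambda k <= lamhi) ->
  (forall k, 0 <= alpha k) ->
  alpha 0 <= 1 ->
  (forall k, alpha k.+1 <= (1 - betak (LF + eta * LH) eta mu lambda k) * alpha k) ->
  IneIREG X Omega PX POm F H alpha lambda (fun _ => eta) x w w' y ->
  let L := LF + eta * LH in
  let beta := ((1 - lamhi ^+ 2 * L ^+ 2)^-1 + (2 * lamlo * eta * mu)^-1)^-1 in
  (0 < beta < 1) /\
  forall k : nat, (1 <= k)%N ->
    0 <= Gap (ybar L eta mu lambda y k) F X /\
    Gap (ybar L eta mu lambda y k) F X <=
      (1 - beta) ^+ k / (2 * lamlo) *
        (diam X ^+ 2 + \sum_(j < k) pprev L eta mu lambda j * delta alpha x j)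
      + eta * (lamhi * supnorm H X * diam X / lamlo).
Proof.
move=> LF0 LH0 monF monH LipF LipH mu0 smH Xne cX cvxX Omne clO cvxO XO OD
  projX projO VIne eta0 lo0 lolohi hiL lamb alpha0 alpha01 alphadec Ine L beta.
case: Ine => Xx0 Ew Ew' Ey Ex.
have Ey' : forall k, y k = PX (w k - lambda k *: (F (w' k) + eta *: H (w' k))) by exact: Ey.
have Ex' : forall k, x k.+1 = PX (w k - lambda k *: (F (y k) + eta *: H (y k))) by exact: Ex.
clear Ey Ex.
have L0 : 0 < L by rewrite /L; apply: addr_gt0 => //; apply: mulr_gt0.
have hiL' : lamhi * L < 1.
  have Lne : L != 0 by rewrite gt_eqF. by rewrite -(mulVf Lne) ltr_pM2r.
have lamk0 : forall k, 0 < lambda k.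
  by move=> k; have /andP[h _] := lamb k; lra.
have lamkL : forall k, lambda k * L < 1.
  move=> k; have /andP[_ h] := lamb k.
  by apply: le_lt_trans hiL'; rewrite ler_pM2r.
have aK : forall k, 0 < 1 - lambda k ^+ 2 * L ^+ 2 /\ 1 - lambda k ^+ 2 * L ^+ 2 <= 1.
  move=> k; have := lamkL k; have := lamk0 k; move=> h1 h2.
  have h3 : 0 < lambda k * L by apply: mulr_gt0.
  rewrite -exprMn; split; nra.
have bK : forall k, 0 < 2 * lambda k * eta * mu.
  by move=> k; apply: mulr_gt0 => //; apply: mulr_gt0 => //; apply: mulr_gt0 => //; apply: lamk0.
set bk := betak L eta mu lambda.
have bk01 : forall k, 0 < bk k < 1.
  by move=> k; have [h1 h2] := aK k; exact: beta_pos h1 h2 (bK k).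
have a0 : 0 < 1 - lamhi ^+ 2 * L ^+ 2 /\ 1 - lamhi ^+ 2 * L ^+ 2 <= 1.
  have h3 : 0 < lamhi * L by apply: mulr_gt0 => //; lra.
  rewrite -exprMn; split; nra.
have beta01 : 0 < beta < 1.
  have b0 : 0 < 2 * lamlo * eta * mu.
    by apply: mulr_gt0 => //; apply: mulr_gt0 => //; apply: mulr_gt0.
  by case: a0 => h1 h2; exact: beta_pos h1 h2 b0.
have betale : forall k, beta <= bk k.
  move=> k; rewrite /beta /bk /betak; apply: beta_mono.
  - by case: a0.
  - by apply: mulr_gt0 => //; apply: mulr_gt0 => //; apply: mulr_gt0.
  - have /andP[_ h] := lamb k; have := lamk0 k => h0.
    have : lambda k ^+ 2 * L ^+ 2 <= lamhi ^+ 2 * L ^+ 2.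
      apply: ler_wpM2r; first by rewrite sqr_ge0.
      by apply: lerXn2r => //; rewrite nnegrE; lra.
    lra.
  - have /andP[h _] := lamb k.
    apply: ler_wpM2r; first exact: ltW.
    apply: ler_wpM2r; first exact: ltW.
    by apply: ler_wpM2l.
split => //.
have prodpos : forall k, 0 < \prod_(i < k) (1 - bk i).
  by move=> k; apply: prodr_gt0 => i _; have := bk01 i; lra.
have pprevE : forall k, pprev L eta mu lambda k = (\prod_(i < k) (1 - bk i))^-1.
  by case=> [|k] //=; rewrite big_ord0 invr1.
have pkE : forall k, pk L eta mu lambda k = (\prod_(i < k.+1) (1 - bk i))^-1 by [].
have pkpos : forall k, 0 < pk L eta mu lambda k.
  by move=> k; rewrite pkE invr_gt0.
have pprevpos : forall k, 0 < pprev L eta mu lambda k.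
  by move=> k; rewrite pprevE invr_gt0.
have pkb : forall k, pk L eta mu lambda k * (1 - bk k) = pprev L eta mu lambda k.
  move=> k; rewrite pkE pprevE big_ord_recr /= invfM -mulrA mulVf ?mulr1 //.
  by rewrite gt_eqF // subr_gt0; case/andP: (bk01 k).
have [M HM] := compact_enorm_bound _ cX.
have [x0 Xx0'] := Xne.
have diamB : forall a b, X a -> X b -> enorm (a - b) <= diam X.
  move=> a b Xa Xb.
  have hs : has_sup [set r | exists x y, [/\ X x, X y & r = enorm (x - y)]].
    split; first by exists (enorm (a - b)), a, b.
    exists (M + M) => r [p [q [Xp Xq ->]]].
    apply: le_trans (enorm_triangleB p q) _; apply: lerD; exact: HM.
  by apply: (sup_upper_bound hs); exists a, b.
have DH : forall a, X a -> DomH a by move=> a Xa; exact: (OD _ (XO _ Xa)).2.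
have DF : forall a, Omega a -> DomF a by move=> a Oa; exact: (OD _ Oa).1.
have DH' : forall a, Omega a -> DomH a by move=> a Oa; exact: (OD _ Oa).2.
have CHB : forall a, X a -> enorm (H a) <= supnorm H X.
  move=> a Xa.
  have hs : has_sup [set r | exists2 x, X x & r = enorm (H x)].
    split; first by exists (enorm (H a)), a.
    exists (enorm (H x0) + LH * (M + M)) => r [p Xp ->].
    have e : H p = H x0 + (H p - H x0) by rewrite addrC subrK.
    rewrite {1}e; apply: le_trans (enorm_triangle _ _) _; apply: lerD => //.
    apply: le_trans (LipH _ _ (DH _ Xp) (DH _ Xx0')) _.
    apply: ler_wpM2l; first exact: ltW.
    apply: le_trans (enorm_triangleB p x0) _; apply: lerD; exact: HM.
  by apply: (sup_upper_bound hs); exists a.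
have D0 : 0 <= diam X := le_trans (enorm_ge0 _) (diamB x0 x0 Xx0' Xx0').
have CH0 : 0 <= supnorm H X := le_trans (enorm_ge0 _) (CHB x0 Xx0').
have Xx : forall k, X (x k).
  by case=> // k; rewrite Ex'; exact: (projX _).1.
have Xy : forall k, X (y k) by move=> k; rewrite Ey'; exact: (projX _).1.
have Ow' : forall k, Omega (w' k) by move=> k; rewrite Ew'; exact: (projO _).1.
have stepk : forall k z, X z -> dot (x k.+1 - z) (x k.+1 - z) <=
    (1 - bk k) * dot (w k - z) (w k - z) + 2 * lambda k * dot (F z + eta *: H z) (z - y k).
  move=> k z Xz.
  have Oy := XO _ (Xy k). have Oz := XO _ Xz.
  apply: (@step R n F H LF LH mu (lambda k) eta (w k) (w' k) (y k) (x k.+1) z).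
  - exact: ltW. - exact: ltW. - exact: eta0. - exact: lamk0. - exact: mu0.
  - exact: lamkL.
  - have := @proj_var R n X PX (w k - lambda k *: (F (w' k) + eta *: H (w' k))) (x k.+1) cvxX projX (Xx k.+1).
    by rewrite -Ey'.
  - have := @proj_var R n X PX (w k - lambda k *: (F (y k) + eta *: H (y k))) z cvxX projX Xz.
    by rewrite -Ex'.
  - have := @proj_var R n Omega POm (w k) (y k) cvxO projO Oy.
    by rewrite -Ew'.
  - exact: LipF (DF _ (Ow' k)) (DF _ Oy).
  - exact: LipH (DH' _ (Ow' k)) (DH' _ Oy).
  - exact: monF (DF _ Oy) (DF _ Oz).
  - exact: smH (DH' _ Oy) (DH' _ Oz).
have phiD : forall z, X z -> forall k, dot (x k - z) (x k - z) <= diam X ^+ 2.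
  move=> z Xz k; rewrite -enorm_sq; have := diamB _ _ (Xx k) Xz.
  have := enorm_ge0 (x k - z); nra.
have inv : forall z, X z -> forall k,
  pprev L eta mu lambda k * dot (x k - z) (x k - z)
  - pprev L eta mu lambda k * alpha k * dot (x k.-1 - z) (x k.-1 - z)
  <= (1 - pprev L eta mu lambda k * alpha k) * diam X ^+ 2
     + \sum_(j < k) pprev L eta mu lambda j * delta alpha x j
     + \sum_(j < k) pk L eta mu lambda j * (2 * lambda j * dot (F z + eta *: H z) (z - y j)).
  move=> z Xz; elim=> [|k IH].
    rewrite /= !big_ord0 !addr0 !mul1r.
    have h1 := phiD z Xz 0.
    have h2 : 0 <= 1 - alpha 0 by lra.
    have h1' : 0 <= diam X ^+ 2 - dot (x 0 - z) (x 0 - z) by lra.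
    have h3 := mulr_ge0 h2 h1'.
    nra.
  have st := stepk k z Xz.
  have ew : w k - z = (1 + alpha k) *: (x k - z) - alpha k *: (x k.-1 - z).
    by rewrite Ew; apply/rowP => i; rewrite !mxE; ring.
  have ed : x k - x k.-1 = (x k - z) - (x k.-1 - z).
    by apply/rowP => i; rewrite !mxE; ring.
  have W : dot (w k - z) (w k - z) = (1 + alpha k) * dot (x k - z) (x k - z)
      - alpha k * dot (x k.-1 - z) (x k.-1 - z) + delta alpha x k.
    by rewrite /delta enorm_sq ed ew inert.
  have m := ler_wpM2l (ltW (pkpos k)) st.
  rewrite mulrDr mulrA pkb W in m.
  have cdec : pk L eta mu lambda k * alpha k.+1 <= pprev L eta mu lambda k * alpha k.
    rewrite -pkb -mulrA; apply: ler_wpM2l; first exact: ltW.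
    exact: alphadec.
  have c0 : 0 <= pprev L eta mu lambda k * alpha k.
    by apply: mulr_ge0; [exact: ltW | exact: alpha0].
  have hint : 0 <= (pprev L eta mu lambda k * alpha k - pk L eta mu lambda k * alpha k.+1)
     * (diam X ^+ 2 - dot (x k - z) (x k - z)).
    by apply: mulr_ge0; have := phiD z Xz k; lra.
  rewrite /= !big_ord_recr /=.
  nra.
move=> k k1.
set Dl := \sum_(j < k) pprev L eta mu lambda j * delta alpha x j.
set Bnd := (1 - beta) ^+ k / (2 * lamlo) * (diam X ^+ 2 + Dl)
   + eta * (lamhi * supnorm H X * diam X / lamlo).
set P := \sum_(j < k) lambda j * pk L eta mu lambda j.
have P0 : 0 < P.
  apply: (sum_pos (fun j => lambda j * pk L eta mu lambda j)) => // j.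
  by apply: mulr_gt0.
have Dl0 : 0 <= Dl.
  apply: sumr_ge0 => j _; apply: mulr_ge0; first exact: ltW.
  rewrite /delta; apply: mulr_ge0; last by rewrite enorm_sq dot_ge0.
  by apply: mulr_ge0 => //; have := alpha0 j; lra.
have Pge : lamlo / (1 - beta) ^+ k <= P.
  case: k k1 @Dl @Bnd @P P0 Dl0 => // k' _ Dl Bnd P P0 Dl0.
  rewrite /P big_ord_recr /=.
  have r0 : 0 <= \sum_(i < k') lambda i * pk L eta mu lambda i.
    by apply: sumr_ge0 => j _; apply: mulr_ge0; [exact: ltW | exact: ltW].
  have h1 : lamlo <= lambda k' by case/andP: (lamb k').
  have h2 : ((1 - beta) ^+ k'.+1)^-1 <= pk L eta mu lambda k'.
    rewrite pkE lef_pV2 ?posrE //; last first.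
      by apply: exprn_gt0; case/andP: beta01 => _ ?; lra.
    have -> : (1 - beta) ^+ k'.+1 = \prod_(i < k'.+1) (1 - beta).
      by rewrite prodr_const card_ord.
    apply: ler_prod => i _; have := bk01 i; have := betale i; case/andP: beta01.
    move=> ? ? ? /andP[? ?]; apply/andP; split; lra.
  have h3 : 0 <= ((1 - beta) ^+ k'.+1)^-1.
    by rewrite invr_ge0; apply: exprn_ge0; case/andP: beta01 => _ ?; lra.
  have : lamlo * ((1 - beta) ^+ k'.+1)^-1 <= lambda k' * pk L eta mu lambda k'.
    by apply: ler_pM => //; exact: ltW.
  lra.
have key : forall z, X z -> dot (F z) (ybar L eta mu lambda y k - z) <= Bnd.
  move=> z Xz.
  set Aw := \sum_(j < k) lambda j * pk L eta mu lambda j * dot (F z) (y j - z).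
  set S := \sum_(j < k) pk L eta mu lambda j * (2 * lambda j * dot (F z + eta *: H z) (z - y j)).
  have nn : 0 <= diam X ^+ 2 + Dl + S.
    have I := inv z Xz k.
    have c0 : 0 <= pprev L eta mu lambda k * alpha k.
      by apply: mulr_ge0; [exact: ltW | exact: alpha0].
    have h1 := phiD z Xz k.-1.
    have h2 := mulr_ge0 (ltW (pprevpos k)) (dot_ge0 (x k - z)).
    have hint : 0 <= pprev L eta mu lambda k * alpha k * (diam X ^+ 2 - dot (x k.-1 - z) (x k.-1 - z)).
      by apply: mulr_ge0 => //; lra.
    rewrite -/Dl -/S in I; nra.
  have Sle : S <= - (2 * Aw) + 2 * eta * supnorm H X * diam X * P.
    apply: (@le_trans _ _ (\sum_(j < k) (- (2 * (lambda j * pk L eta mu lambda j * dot (F z) (y j - z)))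
        + 2 * eta * supnorm H X * diam X * (lambda j * pk L eta mu lambda j)))).
      apply: ler_sum => j _.
      have e2 : dot (F z) (z - y j) = - dot (F z) (y j - z) by rewrite -dotNr opprB.
      rewrite dotDl dotZl e2.
      have hb : dot (H z) (z - y j) <= supnorm H X * diam X.
        apply: le_trans (CS _ _) _; apply: ler_pM; rewrite ?enorm_ge0 //.
          exact: CHB.
        exact: diamB.
      have q0 : 0 < lambda j * pk L eta mu lambda j * eta.
        by apply: mulr_gt0 => //; apply: mulr_gt0.
      have := ler_wpM2l (ltW q0) hb.
      nra.
    by rewrite big_split /= sumrN -!mulr_sumr.
  have Leq : Lambda L eta mu lambda k = eta * P.
    by rewrite /Lambda /P mulr_sumr; apply: eq_bigr => j _; ring.
  have yeq : ybar L eta mu lambda y k - z =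
      (Lambda L eta mu lambda k)^-1 *:
        \sum_(j < k) (lambda j * eta * pk L eta mu lambda j) *: (y j - z).
    have Lne : Lambda L eta mu lambda k != 0.
      by rewrite Leq mulf_neq0 // gt_eqF.
    rewrite /ybar.
    have -> : \sum_(j < k) (lambda j * eta * pk L eta mu lambda j) *: (y j - z) =
       \sum_(j < k) (lambda j * eta * pk L eta mu lambda j) *: y j
       - Lambda L eta mu lambda k *: z.
      rewrite /Lambda scaler_suml -sumrB; apply: eq_bigr => j _.
      by rewrite scalerBr.
    by rewrite scalerBr scalerA mulVf // scale1r.
  have deq : dot (F z) (ybar L eta mu lambda y k - z) = Aw / P.
    rewrite yeq dotZr (dot_sumr _ _ (fun j => (lambda j * eta * pk L eta mu lambda j) *: (y j - z))) Leq /Aw.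
    have -> : \sum_(j < k) dot (F z) ((lambda j * eta * pk L eta mu lambda j) *: (y j - z))
      = eta * \sum_(j < k) lambda j * pk L eta mu lambda j * dot (F z) (y j - z).
      rewrite mulr_sumr; apply: eq_bigr => j _; rewrite dotZr; ring.
    field; apply/andP; split; rewrite gt_eqF //.
  rewrite deq.
  have h1 : Aw / P <= (diam X ^+ 2 + Dl) / (2 * P) + eta * supnorm H X * diam X.
    rewrite ler_pdivrMr //.
    have -> : ((diam X ^+ 2 + Dl) / (2 * P) + eta * supnorm H X * diam X) * P
       = (diam X ^+ 2 + Dl) / 2 + eta * supnorm H X * diam X * P.
      by field; rewrite gt_eqF.
    lra.
  have iP : P^-1 <= (1 - beta) ^+ k / lamlo.
    have bp : 0 < (1 - beta) ^+ k by apply: exprn_gt0; case/andP: beta01 => _ ?; lra.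
    have : P^-1 <= (lamlo / (1 - beta) ^+ k)^-1.
      rewrite lef_pV2 ?posrE //; apply: divr_gt0 => //.
    by rewrite invf_div.
  have h2 : (diam X ^+ 2 + Dl) / (2 * P) <= (1 - beta) ^+ k / (2 * lamlo) * (diam X ^+ 2 + Dl).
    have e1 : (diam X ^+ 2 + Dl) / (2 * P) = (diam X ^+ 2 + Dl) * (P^-1 / 2).
      by field; rewrite gt_eqF.
    have e2 : (1 - beta) ^+ k / (2 * lamlo) * (diam X ^+ 2 + Dl) =
       (diam X ^+ 2 + Dl) * (((1 - beta) ^+ k / lamlo) / 2).
      by field; rewrite gt_eqF.
    rewrite e1 e2; apply: ler_wpM2l; first by have := sqr_ge0 (diam X); lra.
    apply: ler_wpM2r => //; rewrite invr_ge0; lra.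
  have h3 : eta * supnorm H X * diam X <= eta * (lamhi * supnorm H X * diam X / lamlo).
    rewrite -mulrA; apply: ler_wpM2l; first exact: ltW.
    have r : 1 <= lamhi / lamlo by rewrite ler_pdivlMr // mul1r.
    have := ler_wpM2l (mulr_ge0 CH0 D0) r; rewrite mulr1 => h.
    have -> : lamhi * supnorm H X * diam X / lamlo = supnorm H X * diam X * (lamhi / lamlo).
      by ring.
    exact: h.
  rewrite /Bnd; lra.
have Xyb : X (ybar L eta mu lambda y k).
  have := @conv_comb R n X (fun j => lambda j * eta * pk L eta mu lambda j) y k cvxX _ Xy k1.
  apply => j; apply: mulr_gt0 => //; apply: mulr_gt0 => //.
have hs : has_sup [set r | exists2 z, X z & r = dot (F z) (ybar L eta mu lambda y k - z)].
  split; first by exists 0, (ybar L eta mu lambda y k) => //; rewrite subrr dot0r.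
  by exists Bnd => r [z Xz ->]; exact: key.
split.
  apply: (sup_upper_bound hs).
  by exists (ybar L eta mu lambda y k) => //; rewrite subrr dot0r.
apply: ge_sup; first by exists (dot (F x0) (ybar L eta mu lambda y k - x0)), x0.
by move=> r [z Xz ->]; exact: key.
Qed.
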